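(* Let $P_0,P_1,P_2\in\mathbb H$ be distinct, labelled so that $\chi:=\langle P_0\tilde\times P_1,P_2\rangle\ge0$ and so that $d_0=\max\{d_0,d_1,d_2\}$, where $d_i:=\sqrt{1-2\langle P_{i+1},P_{i+2}\rangle}$ for $i\in\mathbb Z/3\mathbb Z$. Let $\varepsilon\in\{-1,1\}$, $\alpha:=-1+\langle P_0,P_1\rangle+\langle P_1,P_2\rangle+\langle P_2,P_0\rangle$, $\gamma:=3(d_0^2+1)(d_1^2+1)(d_2^2+1)$, $$r_d:=\frac4\gamma\Bigl(-2\alpha(d_0d_1d_2-d_0-d_1-d_2)-2\varepsilon\chi(d_0d_1+d_1d_2+d_2d_0-1)\Bigr),\qquad r_i:=\frac{|r_d|}{d_{i+1}+d_{i+2}}.$$ Then for every $i\in\mathbb Z/3\mathbb Z$, $$r_i\le\rho:=\frac23+\frac2{27}+\frac1{3\sqrt3}\approx0.93319.$$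
   Context: $\langle v,w\rangle=-v_1w_1+v_2w_2+v_3w_3$ on $\mathbb R^3$; $\mathbb H=\{P\in\mathbb R^3:\langle P,P\rangle=-1,\ P_1\ge1\}$; $v\tilde\times w:=J(v\times w)$ with $J=\mathrm{diag}(-1,1,1)$ and $\times$ the Euclidean cross product. *)

(* Defs.v *)
From Stdlib Require Import Reals.
Open Scope R_scope.

Definition vec3 : Type := (R * R * R)%type.

Definition c1 (v : vec3) : R := fst (fst v).
Definition c2 (v : vec3) : R := snd (fst v).
Definition c3 (v : vec3) : R := snd v.

Definition lor (v w : vec3) : R := - c1 v * c1 w + c2 v * c2 w + c3 v * c3 w.

Definition inH (P : vec3) : Prop := lor P P = -1 /\ 1 <= c1 P.

Definition cross (v w : vec3) : vec3 :=
  (c2 v * c3 w - c3 v * c2 w, c3 v * c1 w - c1 v * c3 w, c1 v * c2 w - c2 v * c1 w).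

Definition Jmap (v : vec3) : vec3 := (- c1 v, c2 v, c3 v).

Definition lcross (v w : vec3) : vec3 := Jmap (cross v w).

Definition dq (P Q : vec3) : R := sqrt (1 - 2 * lor P Q).

Definition rho : R := 2/3 + 2/27 + 1 / (3 * sqrt 3).

(* Main.v *)
Require Import Defs.
From Stdlib Require Import Reals Lra Psatz.
Open Scope R_scope.

Lemma lor_nonpos (P Q : vec3) : inH P -> inH Q -> lor P Q <= 0.
Proof.
  destruct P as [[p1 p2] p3], Q as [[q1 q2] q3].
  unfold inH, lor, Defs.c1, Defs.c2, Defs.c3; simpl. intros [HP HP1] [HQ HQ1].
  destruct (Rle_dec (p2*q2+p3*q3) (p1*q1)) as [H|H]; [lra|].
  exfalso. apply Rnot_le_lt in H.
  assert (0 <= p1*q1) by nra.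
  assert ((p1*q1)^2 < (p2*q2+p3*q3)^2).
  { assert (0 < (p2*q2+p3*q3) - p1*q1) by lra. assert (0 < (p2*q2+p3*q3) + p1*q1) by lra.
    apply Rminus_gt_0_lt. replace ((p2*q2+p3*q3)^2 - (p1*q1)^2) with (((p2*q2+p3*q3) - p1*q1)*((p2*q2+p3*q3) + p1*q1)) by ring.
    apply Rmult_lt_0_compat; lra. }
  assert ((p2*q2+p3*q3)^2 <= (p2^2+p3^2)*(q2^2+q3^2)).
  { assert (0 <= (p2*q3-p3*q2)^2) by apply pow2_ge_0.
    replace ((p2^2+p3^2)*(q2^2+q3^2)) with ((p2*q2+p3*q3)^2 + (p2*q3-p3*q2)^2) by ring. lra. }
  assert ((p1*q1)^2 = (1+p2^2+p3^2)*(1+q2^2+q3^2)).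
  { replace ((p1*q1)^2) with ((p1*p1)*(q1*q1)) by ring.
    replace (p1*p1) with (1+p2^2+p3^2) by nra. replace (q1*q1) with (1+q2^2+q3^2) by nra. ring. }
  assert (0 <= p2^2) by apply pow2_ge_0. assert (0 <= p3^2) by apply pow2_ge_0.
  assert (0 <= q2^2) by apply pow2_ge_0. assert (0 <= q3^2) by apply pow2_ge_0.
  assert ((p2^2+p3^2)*(q2^2+q3^2) <= (1+p2^2+p3^2)*(1+q2^2+q3^2)) by nra.
  lra.
Qed.

Lemma chi_sq (P0 P1 P2 : vec3) : inH P0 -> inH P1 -> inH P2 ->
  let a := lor P1 P2 in let b := lor P2 P0 in let c := lor P0 P1 in
  (lor (lcross P0 P1) P2)^2 = 1 - a^2 - b^2 - c^2 - 2*a*b*c.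
Proof.
  destruct P0 as [[x0 y0] z0], P1 as [[x1 y1] z1], P2 as [[x2 y2] z2].
  unfold inH, lor, lcross, Jmap, cross, Defs.c1, Defs.c2, Defs.c3; simpl.
  intros [H0 _] [H1 _] [H2 _].
  transitivity (-((- x0 * x0 + y0 * y0 + z0 * z0)*(- x1 * x1 + y1 * y1 + z1 * z1)*(- x2 * x2 + y2 * y2 + z2 * z2) - (- x0 * x0 + y0 * y0 + z0 * z0)*(- x1 * x2 + y1 * y2 + z1 * z2)^2 - (- x1 * x1 + y1 * y1 + z1 * z1)*(- x2 * x0 + y2 * y0 + z2 * z0)^2 - (- x2 * x2 + y2 * y2 + z2 * z2)*(- x0 * x1 + y0 * y1 + z0 * z1)^2 + 2*(- x1 * x2 + y1 * y2 + z1 * z2)*(- x2 * x0 + y2 * y0 + z2 * z0)*(- x0 * x1 + y0 * y1 + z0 * z1))).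
  - ring.
  - rewrite H0, H1, H2. ring.
Qed.

Lemma key (a b c chi eps d0 d1 d2 : R) :
  d0^2 = 1 - 2*a -> d1^2 = 1 - 2*b -> d2^2 = 1 - 2*c ->
  1 <= d0 -> 1 <= d1 -> 1 <= d2 ->
  chi^2 = 1 - a^2 - b^2 - c^2 - 2*a*b*c -> eps^2 = 1 ->
  let alpha := -1 + c + a + b in
  let gamma := 3 * (d0 ^ 2 + 1) * (d1 ^ 2 + 1) * (d2 ^ 2 + 1) in
  let rd := 4 / gamma *
      (- 2 * alpha * (d0 * d1 * d2 - d0 - d1 - d2)
       - 2 * eps * chi * (d0 * d1 + d1 * d2 + d2 * d0 - 1)) in
  Rabs rd <= 4/3.
Proof.
  intros H0 H1 H2 G0 G1 G2 Hc He alpha gamma rd.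
  set (K := (d0 ^ 2 + 1) * (d1 ^ 2 + 1) * (d2 ^ 2 + 1)).
  set (A := -2*alpha). set (B := -2*eps*chi).
  set (X := d0 * d1 * d2 - d0 - d1 - d2). set (Y := d0 * d1 + d1 * d2 + d2 * d0 - 1).
  assert (HK : 0 < K) by (unfold K; assert (0 < d0^2+1) by nra; assert (0 < d1^2+1) by nra;
      assert (0 < d2^2+1) by nra; apply Rmult_lt_0_compat; [apply Rmult_lt_0_compat|]; lra).
  assert (HXY : X^2 + Y^2 = K) by (unfold X, Y, K; ring).
  assert (HAB : A^2 + B^2 = K).
  { unfold A, B, K, alpha.
    replace ((-2*eps*chi)^2) with (4*eps^2*chi^2) by ring. rewrite He, Hc.
    replace a with ((1 - d0^2)/2) by lra. replace b with ((1 - d1^2)/2) by lra.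
    replace c with ((1 - d2^2)/2) by lra. field. }
  assert (HS : (A*X + B*Y)^2 <= K^2).
  { assert ((A*X+B*Y)^2 + (A*Y-B*X)^2 = (A^2+B^2)*(X^2+Y^2)) by ring.
    rewrite HXY, HAB in H. assert (0 <= (A*Y-B*X)^2) by apply pow2_ge_0.
    replace (K^2) with (K*K) by ring. lra. }
  assert (HS' : Rabs (A*X+B*Y) <= K).
  { assert (E : Rabs (A*X+B*Y) ^2 = (A*X+B*Y)^2) by apply pow2_abs.
    destruct (Rle_dec (Rabs (A*X+B*Y)) K) as [h|h]; [exact h|]. exfalso.
    apply Rnot_le_lt in h.
    assert (0 < (Rabs (A*X+B*Y) - K)*(Rabs (A*X+B*Y) + K)) by (apply Rmult_lt_0_compat; lra).
    assert ((Rabs (A*X+B*Y) - K)*(Rabs (A*X+B*Y) + K) = Rabs (A*X+B*Y) ^2 - K^2) by ring.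
    lra. }
  unfold rd. replace (- 2 * alpha * X - 2 * eps * chi * Y) with (A*X+B*Y) by (unfold A,B; ring).
  replace gamma with (3*K) by (unfold gamma, K; ring).
  rewrite Rabs_mult, Rabs_right.
  2:{ apply Rle_ge. apply Rlt_le. apply Rdiv_lt_0_compat; lra. }
  apply Rle_trans with (4/(3*K) * K).
  - apply Rmult_le_compat_l. { apply Rlt_le, Rdiv_lt_0_compat; lra. }
    replace (-2 * alpha * (d0 * d1 * d2 - d0 - d1 - d2) - 2 * eps * chi * (d0 * d1 + d1 * d2 + d2 * d0 - 1)) with (A*X+B*Y) by (unfold A,B,X,Y; ring).
    exact HS'.
  - right. field. lra.
Qed.

Theorem proposition5p1 (P0 P1 P2 : vec3) (eps : R) :
  inH P0 -> inH P1 -> inH P2 ->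
  P0 <> P1 -> P1 <> P2 -> P2 <> P0 ->
  (eps = 1 \/ eps = -1) ->
  let chi := lor (lcross P0 P1) P2 in
  let d0 := dq P1 P2 in
  let d1 := dq P2 P0 in
  let d2 := dq P0 P1 in
  0 <= chi ->
  d1 <= d0 -> d2 <= d0 ->
  let alpha := -1 + lor P0 P1 + lor P1 P2 + lor P2 P0 in
  let gamma := 3 * (d0 ^ 2 + 1) * (d1 ^ 2 + 1) * (d2 ^ 2 + 1) in
  let rd := 4 / gamma *
      (- 2 * alpha * (d0 * d1 * d2 - d0 - d1 - d2)
       - 2 * eps * chi * (d0 * d1 + d1 * d2 + d2 * d0 - 1)) in
  let r0 := Rabs rd / (d1 + d2) in
  let r1 := Rabs rd / (d2 + d0) in
  let r2 := Rabs rd / (d0 + d1) in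
  r0 <= rho /\ r1 <= rho /\ r2 <= rho.
Proof.
  intros H0 H1 H2 _ _ _ Heps chi d0 d1 d2 _ _ _ alpha gamma rd r0 r1 r2.
  pose proof (lor_nonpos _ _ H1 H2) as La.
  pose proof (lor_nonpos _ _ H2 H0) as Lb.
  pose proof (lor_nonpos _ _ H0 H1) as Lc.
  assert (Hsq : forall P Q, lor P Q <= 0 -> (dq P Q)^2 = 1 - 2*lor P Q /\ 1 <= dq P Q).
  { intros P Q HPQ. unfold dq. split.
    - simpl. rewrite Rmult_1_r. apply sqrt_sqrt. lra.
    - apply Rle_trans with (sqrt 1); [rewrite sqrt_1; lra | apply sqrt_le_1_alt; lra]. }
  destruct (Hsq _ _ La) as [E0 G0]. destruct (Hsq _ _ Lb) as [E1 G1].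
  destruct (Hsq _ _ Lc) as [E2 G2].
  assert (Hrd : Rabs rd <= 4/3).
  { unfold rd, gamma, alpha.
    apply (key (lor P1 P2) (lor P2 P0) (lor P0 P1) chi eps d0 d1 d2); auto.
    - apply chi_sq; auto.
    - destruct Heps; subst; ring. }
  assert (Hrho : 2/3 <= rho).
  { unfold rho. assert (0 < 3 * sqrt 3).
    { assert (0 < sqrt 3) by (apply sqrt_lt_R0; lra). lra. }
    assert (0 < 1 / (3 * sqrt 3)) by (apply Rdiv_lt_0_compat; lra). lra. }
  assert (Hb : forall s, 2 <= s -> Rabs rd / s <= rho).
  { intros s Hs. apply Rle_trans with (2/3); [|exact Hrho].
    apply Rmult_le_reg_r with s; [lra|]. unfold Rdiv. rewrite Rmult_assoc, Rinv_l by lra.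
    pose proof (Rabs_pos rd). nra. }
  unfold r0, r1, r2, d0, d1, d2. repeat split; apply Hb; lra.
Qed.
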